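(* Let $k$ be a positive integer, $S=\{6k+1,6k+2,9k+3\}$ and $G=\langle S\rangle$. For $i\in\mathbb{N}^*=\mathbb{N}\setminus\{0\}$ let $A_{i,k}=[(6k+1)i,\,(6k+1)i+i]$ and $B_{i,k}=[(6k+1)i+(3k+2),\,(6k+1)i+(3k+2)+i-1]$, and let $H_{2,k}=\{0\}\cup\bigcup_{i\in\mathbb{N}^*}(A_{i,k}\cup B_{i,k})$. Then: (1) $H_{2,k}$ is a submonoid of $(\mathbb{N},+,0)$ containing $S$; (2) $A_{i,k}<B_{i,k}$ for every $i\in[1,3k+1]$; (3) $B_{i,k}\le A_{i+1,k}$ for every $i\in[1,3k]$; (4) $[(6k+1)(3k)+(3k+2),\infty[\ \subseteq H_{2,k}$; (5) $G=H_{2,k}$; (6) $H_{2,k}$ is a $3$-permutation numerical semigroup.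
   Context: $\mathbb{N}=\{0,1,2,\dots\}$. A numerical semigroup is a submonoid $G$ of $(\mathbb{N},+,0)$ with $\mathbb{N}\setminus G$ finite; $\langle S\rangle$ is the submonoid generated by $S$. Writing the elements of a numerical semigroup $G$ as $0=g_0<g_1<g_2<\cdots$, $G$ is an $n$-permutation numerical semigroup if $G=\langle\{g_1,\dots,g_n\}\rangle$ and for every $k\in\mathbb{N}$ the tuple $(g_{kn+1}\bmod n,\dots,g_{kn+n}\bmod n)$ contains exactly one representative of each residue class mod $n$. Notation: $[a,b]=\{x\in\mathbb{N}:a\le x\le b\}$, $[a,\infty[=\{x\in\mathbb{N}:x\ge a\}$. For nonempty $A,B\subseteq\mathbb{N}$, $A<B$ (resp. $A\le B$) means $x<y$ (resp. $x\le y$) for all $x\in A$, $y\in B$. *)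

(* Defs.v *)
From mathcomp Require Import all_boot.
Set Implicit Arguments. Unset Strict Implicit. Unset Printing Implicit Defensive.

Definition is_submonoid (G : nat -> Prop) : Prop :=
  G 0 /\ forall x y, G x -> G y -> G (x + y).

Inductive gen (S : nat -> Prop) : nat -> Prop :=
| gen0 : gen S 0
| genS s x : S s -> gen S x -> gen S (s + x).

Definition cofinite (G : nat -> Prop) : Prop :=
  exists l : seq nat, forall x, ~ G x -> x \in l.

Definition numerical_semigroup (G : nat -> Prop) : Prop :=
  is_submonoid G /\ cofinite G.

(* enum_at G i x : x = g_i, the i-th element of G in increasing order
   (g_0 < g_1 < ...), i.e. x is in G and exactly i elements of G are < x. *)
Definition enum_at (G : nat -> Prop) (i x : nat) : Prop :=
  G x /\ exists s : seq nat, uniq s /\ size s = i /\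
    forall y, y \in s <-> (G y /\ y < x).

Definition perm_numerical_semigroup (n : nat) (G : nat -> Prop) : Prop :=
  numerical_semigroup G /\
  (forall x, G x <-> gen (fun s => exists j, 1 <= j <= n /\ enum_at G j s) x) /\
  (forall m r, r < n ->
     exists! j, (1 <= j <= n) /\ exists x, enum_at G (m * n + j) x /\ x %% n = r).

Definition S_k (k : nat) (s : nat) : Prop :=
  s = 6 * k + 1 \/ s = 6 * k + 2 \/ s = 9 * k + 3.

Definition A_ik (k i : nat) (x : nat) : Prop :=
  (6 * k + 1) * i <= x <= (6 * k + 1) * i + i.

Definition B_ik (k i : nat) (x : nat) : Prop :=
  (6 * k + 1) * i + (3 * k + 2) <= x <= (6 * k + 1) * i + (3 * k + 2) + i - 1.

Definition H2k (k : nat) (x : nat) : Prop :=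
  x = 0 \/ exists i, 0 < i /\ (A_ik k i x \/ B_ik k i x).

Definition set_lt (A B : nat -> Prop) : Prop := forall x y, A x -> B y -> x < y.
Definition set_le (A B : nat -> Prop) : Prop := forall x y, A x -> B y -> x <= y.

(* Main.v *)
Require Import Defs.
From mathcomp Require Import all_boot zify.
Set Implicit Arguments. Unset Strict Implicit.

Definition Hb k x : bool := (x == 0) || has (fun i => (0 < i) &&
  ((((6*k+1)*i <= x) && (x <= (6*k+1)*i+i)) ||
   (((6*k+1)*i+(3*k+2) <= x) && (x <= (6*k+1)*i+(3*k+2)+i-1)))) (iota 0 x.+1).

Lemma H_A k i x : 0 < i -> (6*k+1)*i <= x -> x <= (6*k+1)*i+i -> H2k k x.
Proof. move=> i0 h1 h2; right; exists i; split => //; left; rewrite /A_ik h1 h2. done. Qed.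

Lemma H_B k i x : 0 < i -> (6*k+1)*i+(3*k+2) <= x -> x <= (6*k+1)*i+(3*k+2)+i-1 -> H2k k x.
Proof. move=> i0 h1 h2; right; exists i; split => //; right; rewrite /B_ik h1 h2. done. Qed.

Lemma H_inv k x : H2k k x -> x = 0 \/ exists i, 0 < i /\
  (((6*k+1)*i <= x /\ x <= (6*k+1)*i+i) \/
   ((6*k+1)*i+(3*k+2) <= x /\ x <= (6*k+1)*i+(3*k+2)+i-1)).
Proof.
case=> [->|[i [i0 [h|h]]]]; first by left.
- right; exists i; split => //; left; move: h; rewrite /A_ik => /andP[]; done.
- right; exists i; split => //; right; move: h; rewrite /B_ik => /andP[]; done.
Qed.

Lemma HbP k x : reflect (H2k k x) (Hb k x).
Proof.
apply: (iffP orP).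
- case=> [/eqP->|/hasP[i _ /andP[i0 /orP[/andP[h1 h2]|/andP[h1 h2]]]]]; first by left.
  + exact: (H_A i0).
  + exact: (H_B i0).
- move/H_inv; case=> [->|[i [i0 [[h1 h2]|[h1 h2]]]]]; first by left.
  + right; apply/hasP; exists i; first by rewrite mem_iota; nia.
    by rewrite i0 h1 h2.
  + right; apply/hasP; exists i; first by rewrite mem_iota; nia.
    by rewrite i0 h1 h2 orbT.
Qed.

Definition cnt k x := count (Hb k) (iota 0 x).

Lemma cntD k s l : cnt k (s + l) = cnt k s + count (Hb k) (iota s l).
Proof. by rewrite /cnt iotaD count_cat. Qed.

Lemma cntS k x : cnt k x.+1 = cnt k x + Hb k x.
Proof. by rewrite -addn1 cntD /= addn0. Qed.

Lemma count_all k s l : (forall z, s <= z < s + l -> H2k k z) -> count (Hb k) (iota s l) = l.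
Proof.
move=> H; rewrite -[RHS](size_iota s l) -count_predT; apply: eq_in_count => z.
rewrite mem_iota => hz /=; apply/HbP; exact: H.
Qed.

Lemma count_none k s l : (forall z, s <= z < s + l -> ~ H2k k z) -> count (Hb k) (iota s l) = 0.
Proof.
move=> H; rewrite -(count_pred0 (iota s l)); apply: eq_in_count => z.
rewrite mem_iota => hz /=; apply/negbTE/HbP; exact: H.
Qed.

Lemma gap0 k z : 0 < z < 6*k+1 -> ~ H2k k z.
Proof. move=> hz /H_inv [h|[j [j0 [[h1 h2]|[h1 h2]]]]]; first lia;
  have := leq_mul (leqnn (6*k+1)) j0; nia. Qed.

Lemma gapA k i z : 1 <= i <= 3*k -> (6*k+1)*i + i < z < (6*k+1)*i + 3*k+2 -> ~ H2k k z.
Proof.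
move=> hi hz /H_inv [h|[j [j0 [[h1 h2]|[h1 h2]]]]]; first lia;
  (case: (ltngtP j i) => hj; [have := leq_mul (leqnn (6*k+1)) hj|
    have := leq_mul (leqnn (6*k+1)) hj| subst j]); nia.
Qed.

Lemma gapB k i z : 1 <= i -> i+1 <= 3*k ->
  (6*k+1)*i + 3*k+2 + i <= z < (6*k+1)*(i+1) -> ~ H2k k z.
Proof.
move=> hi hi' hz /H_inv [h|[j [j0 [[h1 h2]|[h1 h2]]]]]; first lia;
  (case: (ltngtP j i) => hj; [have := leq_mul (leqnn (6*k+1)) hj|
    have := leq_mul (leqnn (6*k+1)) hj| subst j]); nia.
Qed.

Lemma tail k x : 0 < k -> (6 * k + 1) * (3 * k) + (3 * k + 2) <= x -> H2k k x.
Proof.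
move=> k0 hx; have ha : 0 < 6*k+1 by lia.
move: (divn_eq x (6*k+1)) (ltn_pmod x ha).
move: (x %/ (6*k+1)) (x %% (6*k+1)) => q r e hr.
have hq : 3*k <= q.
  case: (leqP (3*k) q) => // hq; have := leq_mul (leqnn (6*k+1)) hq; nia.
case: (ltngtP q (3*k)) => hq'; first lia.
- case: (leqP r q) => hrq.
  + apply: (@H_A k q); nia.
  + apply: (@H_B k q); nia.
- subst q; apply: (@H_B k (3*k)); nia.
Qed.

Lemma cnt_a k i : 0 < k -> 1 <= i <= 3*k -> cnt k ((6*k+1)*i) = i*i.
Proof.
move=> k0; elim: i => [|i IH] hi; first lia.
case: (posnP i) => [->|i0].
  have -> : (6*k+1)*1 = 1 + 6*k by lia.
  rewrite cntD count_none; first by rewrite /cnt /=.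
  move=> z hz; apply: gap0; lia.
have -> : (6*k+1)*i.+1 = ((((6*k+1)*i + (i+1)) + (3*k+1-i)) + i) + (3*k-1-i) by lia.
rewrite !cntD IH; last lia.
rewrite (@count_all k ((6*k+1)*i)); last by move=> z hz; apply: (@H_A k i); lia.
rewrite (@count_none k ((6*k+1)*i + (i+1))); last by move=> z hz; apply: (@gapA k i); lia.
rewrite (@count_all k ((6*k+1)*i + (i+1) + (3*k+1-i))); last by move=> z hz; apply: (@H_B k i); lia.
rewrite count_none; last by move=> z hz; apply: (@gapB k i); lia.
lia.
Qed.

Lemma cnt_A k i t : 0 < k -> 1 <= i <= 3*k -> t <= i + 1 -> cnt k ((6*k+1)*i + t) = i*i + t.
Proof.
move=> k0 hi ht; rewrite cntD cnt_a // count_all // => z hz; apply: (@H_A k i); lia.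
Qed.

Lemma cnt_B k i t : 0 < k -> 1 <= i <= 3*k -> t <= i -> cnt k ((6*k+1)*i + (3*k+2) + t) = i*i + i + 1 + t.
Proof.
move=> k0 hi ht.
have -> : (6*k+1)*i + (3*k+2) + t = ((6*k+1)*i + (i+1)) + (3*k+1-i) + t by lia.
rewrite !cntD cnt_a //.
rewrite (@count_all k ((6*k+1)*i)); last by move=> z hz; apply: (@H_A k i); lia.
rewrite (@count_none k ((6*k+1)*i + (i+1))); last by move=> z hz; apply: (@gapA k i); lia.
rewrite count_all; last by move=> z hz; apply: (@H_B k i); lia.
lia.
Qed.

Lemma cnt_mono k x y : x <= y -> cnt k x <= cnt k y.
Proof. move=> h; rewrite -(subnKC h) cntD; exact: leq_addr. Qed.

Lemma cnt_inj k x y : H2k k x -> H2k k y -> cnt k x = cnt k y -> x = y.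
Proof.
move=> hx hy e; case: (ltngtP x y) => // h.
- have := cnt_mono k h; rewrite cntS e; move/HbP: hx => ->; lia.
- have := cnt_mono k h; rewrite cntS e; move/HbP: hy => ->; lia.
Qed.

Lemma enum_iff k n x : enum_at (H2k k) n x <-> H2k k x /\ cnt k x = n.
Proof.
split.
- case=> hx [s [us [sz hs]]]; split => //; rewrite -sz /cnt -size_filter.
  apply/perm_size/uniq_perm => //; first by rewrite filter_uniq // iota_uniq.
  move=> y; rewrite mem_filter mem_iota add0n leq0n /=.
  apply/idP/idP.
  + by case/andP => /HbP h1 h2; apply/hs.
  + by move/hs => [/HbP -> ->].
- case=> hx e; split => //; exists (filter (Hb k) (iota 0 x)); split.
  + by rewrite filter_uniq // iota_uniq.
  split; first by rewrite size_filter.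
  move=> y; rewrite mem_filter mem_iota add0n leq0n /=; split.
  + by case/andP => /HbP.
  + by case=> /HbP -> ->.
Qed.

Lemma exists_cnt k n : 0 < k -> exists x, H2k k x /\ cnt k x = n.
Proof.
move=> k0; set N := (6 * k + 1) * (3 * k) + (3 * k + 2).
have h : exists x, n < cnt k x.
  exists (N + n.+1); rewrite cntD count_all; first lia.
  move=> z hz; apply: tail => //; lia.
case: (ex_minnP h) => x0 hx0 hmin.
case: x0 hx0 hmin => [|x1] hx1 hmin; first by rewrite /cnt in hx1.
have hle : cnt k x1 <= n.
  case: (leqP (cnt k x1) n) => // hc; have := hmin _ hc; lia.
move: hx1; rewrite cntS; case: (boolP (Hb k x1)) => hb /=.
- move=> hc; exists x1; split; [exact/HbP | lia].
- lia.
Qed.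

Lemma mod3a i : (i*i+i) %% 3 != 0 -> i %% 3 = 1.
Proof.
move: (divn_eq i 3) (ltn_pmod i (isT : 0 < 3)).
move: (i %/ 3) (i %% 3) => q c -> hc.
case: c hc => [|[|[|c]]] hc //; nia.
Qed.

Lemma mod3b i : (i*i+2*i) %% 3 != 0 -> i %% 3 = 2.
Proof.
move: (divn_eq i 3) (ltn_pmod i (isT : 0 < 3)).
move: (i %/ 3) (i %% 3) => q c -> hc.
case: c hc => [|[|[|c]]] hc //; nia.
Qed.

Lemma stepL k x y : 0 < k -> H2k k x -> H2k k y -> cnt k y = (cnt k x).+1 ->
  cnt k x %% 3 != 0 -> y %% 3 = x.+1 %% 3.
Proof.
move=> k0 hx hy ey hm.
have next : forall y', H2k k y' -> x < y' -> (forall z, x < z < y' -> ~ H2k k z) -> y = y'.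
  move=> y' hy' lt hz; apply: (@cnt_inj k) => //; rewrite ey.
  rewrite -(subnKC lt) cntD cntS count_none; first by move/HbP: hx => ->; lia.
  move=> z hz'; apply: hz; lia.
have hN : forall z, (6 * k + 1) * (3 * k) + (3 * k + 2) <= z -> H2k k z by move=> z; apply: tail.
case: (boolP (Hb k x.+1)) => [/HbP hx1|/HbP hx1].
  by rewrite (next x.+1) // => z hz; lia.
move: (hx) => /H_inv [e|[i [i0 [[h1 h2]|[h1 h2]]]]].
- by move: hm; rewrite e.
- have ex : x = (6*k+1)*i + i.
    case: (ltngtP x ((6*k+1)*i + i)) => // h; first by case: hx1; apply: (@H_A k i); lia.
    lia.
  have hi : i <= 3*k.
    case: (leqP i (3*k)) => // hi; case: hx1; apply: hN.
    have := leq_mul (leqnn (6*k+1)) hi; nia.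
  have ec : cnt k x = i*i + i by rewrite ex cnt_A //; lia.
  rewrite ec in hm; have := mod3a hm => hi3.
  rewrite (next ((6*k+1)*i + (3*k+2))).
  + rewrite ex; lia.
  + apply: (@H_B k i); lia.
  + lia.
  + move=> z hz; apply: (@gapA k i); lia.
- have ex : x = (6*k+1)*i + (3*k+2) + (i-1).
    case: (ltngtP x ((6*k+1)*i + (3*k+2) + (i-1))) => // h; last lia.
    by case: hx1; apply: (@H_B k i); lia.
  have hi : i + 1 <= 3*k.
    case: (leqP (i+1) (3*k)) => // hi; case: hx1; apply: hN.
    have := leq_mul (leqnn (6*k+1)) hi; nia.
  have ec : cnt k x = i*i + 2*i by rewrite ex cnt_B //; lia.
  rewrite ec in hm; have := mod3b hm => hi3.
  rewrite (next ((6*k+1)*(i+1))).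
  + rewrite ex; lia.
  + apply: (@H_A k (i+1)); lia.
  + lia.
  + move=> z hz; apply: (@gapB k i); lia.
Qed.

Lemma H_add k x y : H2k k x -> H2k k y -> H2k k (x + y).
Proof.
move=> /H_inv [->|[i [i0 [[h1 h2]|[h1 h2]]]]] //;
move=> /H_inv [->|[j [j0 [[g1 g2]|[g1 g2]]]]]; rewrite ?addn0;
  try (by apply: H_A; eauto); try (by apply: H_B; eauto).
- apply: (@H_A k (i+j)); lia.
- apply: (@H_B k (i+j)); lia.
- apply: (@H_B k (i+j)); lia.
- apply: (@H_A k (i+j+1)); lia.
Qed.

Lemma gen_H k x : gen (S_k k) x -> H2k k x.
Proof.
elim => [|s x' hs _ IH]; first by left.
apply: H_add => //; case: hs => [->|[->|->]].
- apply: (@H_A k 1); lia.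
- apply: (@H_A k 1); lia.
- apply: (@H_B k 1); lia.
Qed.

Lemma genA k i t : t <= i -> gen (S_k k) ((6*k+1)*i + t).
Proof.
elim: i t => [|i IH] t ht.
  have -> : (6*k+1)*0 + t = 0 by lia. exact: gen0.
case: t ht => [|t] ht.
- have -> : (6*k+1)*i.+1 + 0 = (6*k+1) + ((6*k+1)*i + 0) by lia.
  apply: genS; [by left | apply: IH; lia].
- have -> : (6*k+1)*i.+1 + t.+1 = (6*k+2) + ((6*k+1)*i + t) by lia.
  apply: genS; [by right; left | apply: IH; lia].
Qed.

Lemma H_gen k x : H2k k x -> gen (S_k k) x.
Proof.
move=> /H_inv [->|[i [i0 [[h1 h2]|[h1 h2]]]]]; first exact: gen0.
- have -> : x = (6*k+1)*i + (x - (6*k+1)*i) by lia.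
  apply: genA; lia.
- have -> : x = (9*k+3) + ((6*k+1)*(i-1) + (x - (6*k+1)*i - (3*k+2))) by nia.
  apply: genS; [by right; right | apply: genA; nia].
Qed.

Lemma gen_mono (S T : nat -> Prop) x : (forall s, S s -> T s) -> gen S x -> gen T x.
Proof. move=> ST; elim => [|s y hs _ IH]; [exact: gen0 | exact: genS (ST _ hs) IH]. Qed.

Theorem lemma4p2 (k : nat) (hk : 0 < k) :
  (is_submonoid (H2k k) /\ (forall s, S_k k s -> H2k k s)) /\
  (forall i, 1 <= i <= 3 * k + 1 -> set_lt (A_ik k i) (B_ik k i)) /\
  (forall i, 1 <= i <= 3 * k -> set_le (B_ik k i) (A_ik k i.+1)) /\
  (forall x, (6 * k + 1) * (3 * k) + (3 * k + 2) <= x -> H2k k x) /\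
  (forall x, gen (S_k k) x <-> H2k k x) /\
  perm_numerical_semigroup 3 (H2k k).
Proof.
have hS : forall s, S_k k s -> H2k k s.
  by move=> s hs; apply: gen_H; rewrite -[s]addn0; apply: genS hs (gen0 _).
have hmon : is_submonoid (H2k k) by split; [left | exact: H_add].
split; first by [].
split.
  move=> i hi x y; rewrite /A_ik /B_ik => /andP[h1 h2] /andP[g1 g2]; lia.
split.
  move=> i hi x y; rewrite /A_ik /B_ik => /andP[h1 h2] /andP[g1 g2]; lia.
split; first by move=> x; apply: tail.
split; first by move=> x; split; [exact: gen_H | exact: H_gen].
split.
  split => //; exists (iota 0 ((6 * k + 1) * (3 * k) + (3 * k + 2))) => x hx.
  rewrite mem_iota add0n leq0n /=; case: (ltnP x ((6 * k + 1) * (3 * k) + (3 * k + 2))) => // h.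
  by case: hx; apply: tail.
split.
  move=> x; split.
  - move/H_gen; apply: gen_mono => s [->|[->|->]].
    + exists 1; split => //; apply/enum_iff; split; first by apply: hS; left.
      rewrite (_ : 6*k+1 = (6*k+1)*1 + 0); last lia. rewrite cnt_A; lia.
    + exists 2; split => //; apply/enum_iff; split; first by apply: hS; right; left.
      rewrite (_ : 6*k+2 = (6*k+1)*1 + 1); last lia. rewrite cnt_A; lia.
    + exists 3; split => //; apply/enum_iff; split; first by apply: hS; right; right.
      rewrite (_ : 9*k+3 = (6*k+1)*1 + (3*k+2) + 0); last lia. rewrite cnt_B; lia.
  - elim => [|s y [j [_ /enum_iff [hs _]]] _ IH]; first by left.
    exact: H_add.
move=> m r hr.
have [x1 [h1 e1]] := exists_cnt (m*3+1) hk.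
have [x2 [h2 e2]] := exists_cnt (m*3+2) hk.
have [x3 [h3 e3]] := exists_cnt (m*3+3) hk.
have r2 : x2 %% 3 = x1.+1 %% 3 by apply: (@stepL k) => //; lia.
have r3 : x3 %% 3 = x2.+1 %% 3 by apply: (@stepL k) => //; lia.
have uq : forall j x, 1 <= j <= 3 -> enum_at (H2k k) (m * 3 + j) x ->
    (j = 1 /\ x = x1) \/ (j = 2 /\ x = x2) \/ (j = 3 /\ x = x3).
  move=> j x hj /enum_iff [hx ex].
  case: j hj ex => [|[|[|[|j]]]] hj ex.
  - lia.
  - left; split => //; apply: (@cnt_inj k) => //; lia.
  - right; left; split => //; apply: (@cnt_inj k) => //; lia.
  - right; right; split => //; apply: (@cnt_inj k) => //; lia.
  - lia.
have P1 : enum_at (H2k k) (m*3+1) x1 by apply/enum_iff.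
have P2 : enum_at (H2k k) (m*3+2) x2 by apply/enum_iff.
have P3 : enum_at (H2k k) (m*3+3) x3 by apply/enum_iff.
have : r = x1 %% 3 \/ r = x2 %% 3 \/ r = x3 %% 3 by lia.
case=> [er|[er|er]].
- exists 1; split; first by split => //; exists x1.
  move=> j' [hj' [x' [hx' ex']]]; case: (uq _ _ hj' hx') => [[-> e]|[[-> e]|[-> e]]] //; lia.
- exists 2; split; first by split => //; exists x2.
  move=> j' [hj' [x' [hx' ex']]]; case: (uq _ _ hj' hx') => [[-> e]|[[-> e]|[-> e]]] //; lia.
- exists 3; split; first by split => //; exists x3.
  move=> j' [hj' [x' [hx' ex']]]; case: (uq _ _ hj' hx') => [[-> e]|[[-> e]|[-> e]]] //; lia.
Qed.
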